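(* Let $n\ge 4$ and $R=\mathbb{C}[z_1,\dots,z_n]$. Then there exist an integer $m$, an integer $P<n$, and homogeneous polynomials $f_1,\dots,f_P,g\in R$ of degree $m$ with $\{f_1,\dots,f_P,g\}$ linearly independent over $\mathbb{C}$, such that, with $I^+=\langle f_1,\dots,f_P\rangle$, one has $\langle g\rangle_{m+1}\subseteq I^+_{m+1}$.
   Context: For a homogeneous ideal $I\subseteq R$, $I_{d}$ denotes its homogeneous component of degree $d$. *)

(* Defs.v *)
From HB Require Import structures.
From mathcomp Require Import all_boot all_algebra.
From mathcomp Require Import complex.
From mathcomp Require Import Rstruct.
From mathcomp Require Import mpoly.
Set Implicit Arguments. Unset Strict Implicit. Unset Printing Implicit Defensive.
Import GRing.Theory.
Local Open Scope ring_scope.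
Local Open Scope complex_scope.

Definition CC : fieldType := (Rdefinitions.R)[i].

Definition in_ideal (n P : nat) (f : 'I_P -> {mpoly CC[n]}) (p : {mpoly CC[n]}) : Prop :=
  exists c : 'I_P -> {mpoly CC[n]}, p = \sum_(i < P) c i * f i.

Definition in_principal (n : nat) (g p : {mpoly CC[n]}) : Prop :=
  exists c : {mpoly CC[n]}, p = c * g.

Definition hcomp (n : nat) (I : {mpoly CC[n]} -> Prop) (d : nat) (p : {mpoly CC[n]}) : Prop :=
  I p /\ p \is d.-homog.

Definition lin_indep (n P : nat) (f : 'I_P -> {mpoly CC[n]}) (g : {mpoly CC[n]}) : Prop :=
  forall (a : 'I_P -> CC) (b : CC),
    \sum_(i < P) a i *: f i + b *: g = 0 -> (forall i, a i = 0) /\ b = 0.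

(* Main.v *)
Require Import Defs.
From HB Require Import structures.
From mathcomp Require Import all_boot all_algebra.
From mathcomp Require Import mpoly zify ring.
Import GRing.Theory.
Local Open Scope ring_scope.

Section S.
Variable n : nat.
Local Notation N := n.+4.
Definition x (k : nat) : {mpoly CC[N]} := 'X_(inord k).
Definition e (k : nat) : 'X_{1..N} := U_(inord k)%MM.

Lemma inord_eqb (a b : nat) : (a < N)%N -> (b < N)%N ->
  (inord a == inord b :> 'I_N) = (a == b).
Proof.
move=> Ha Hb; apply/eqP/eqP => [/(f_equal (@nat_of_ord _))|->] //.
by rewrite !inordK.
Qed.

Lemma xx a b : x a * x b = 'X_[(e a + e b)%MM].
Proof. by rewrite mpolyXD. Qed.

Lemma coefXX a b c d : (a < N)%N -> (b < N)%N -> (c < N)%N -> (d < N)%N ->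
  ('X_[(e a + e b)%MM] : {mpoly CC[N]})@_(e c + e d)%MM
   = (((a==c)&&(b==d)) || ((a==d)&&(b==c)))%:R.
Proof.
move=> Ha Hb Hc Hd; rewrite mcoeffX.
suff -> : ((e a + e b)%MM == (e c + e d)%MM) = (((a==c)&&(b==d)) || ((a==d)&&(b==c))) by [].
apply/eqP/idP.
- move/mnmP => H.
  have H' j : (j < N)%N -> ((a==j) + (b==j) = (c==j) + (d==j))%N.
    move=> Hj; move: (H (inord j)); rewrite !mnmDE !mnm1E.
    by rewrite !inord_eqb.
  move: (H' a Ha) (H' b Hb) (H' c Hc) (H' d Hd).
  by rewrite !eqxx; do 6 (case: eqP => ? //=); lia.
- by case/orP => /andP[/eqP-> /eqP->] //; rewrite addmC.
Qed.
Definition ff (i : 'I_n.+3) : {mpoly CC[N]} :=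
  match nat_of_ord i with
  | 0 => x 0 * x 2 | 1 => x 1 * x 3 | 2 => x 0 * x 3 + x 1 * x 2
  | k.+3 => x 0 * x k.+4 end.
Definition MM (i : 'I_n.+3) : 'X_{1..N} :=
  match nat_of_ord i with
  | 0 => (e 0 + e 2)%MM | 1 => (e 1 + e 3)%MM | 2 => (e 1 + e 2)%MM
  | k.+3 => (e 0 + e k.+4)%MM end.
Definition gg : {mpoly CC[N]} := x 0 * x 3.

Lemma coef_ff i k : (ff i)@_(MM k) = (i == k)%:R.
Proof.
case: i k => [[|[|[|i]]] Hi] [[|[|[|k]]] Hk];
  rewrite /ff /MM /= ?mcoeffD !xx !coefXX //=; try lia.
all: rewrite ?mulr0n ?mulr1n ?addr0 ?add0r ?orbF //.
Qed.
Lemma coef_ff_g i : (ff i)@_(e 0 + e 3)%MM = (nat_of_ord i == 2)%:R.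
Proof.
case: i => [[|[|[|i]]] Hi]; rewrite /ff /= ?mcoeffD !xx !coefXX //=; try lia.
all: rewrite ?mulr0n ?mulr1n ?addr0 ?add0r ?orbF //.
Qed.

Lemma gg_X : gg = 'X_[(e 0 + e 3)%MM].
Proof. exact: xx. Qed.

Lemma coef_g k : gg@_(MM k) = 0.
Proof.
case: k => [[|[|[|k]]] Hk]; rewrite gg_X /MM /= !coefXX //=; try lia.
Qed.

Lemma coef_gg : gg@_(e 0 + e 3)%MM = 1.
Proof. by rewrite gg_X mcoeffX eqxx. Qed.

Lemma homog_xx a b : x a * x b \is 2.-homog.
Proof. by rewrite xx dhomogX /= mdegD !mdeg1. Qed.

Lemma homog_ff i : ff i \is 2.-homog.
Proof.
case: i => [[|[|[|i]]] Hi]; rewrite /ff /=; try exact: homog_xx.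
by apply: dhomogD; apply: homog_xx.
Qed.

Lemma lin_indep_ff : lin_indep ff gg.
Proof.
move=> a b H.
have Ha k : a k = 0.
  move: (f_equal (mcoeff (MM k)) H).
  rewrite mcoeffD mcoeffZ coef_g mulr0 addr0 mcoeff0 raddf_sum /=.
  rewrite (eq_bigr (fun i => a i * (i == k)%:R)); last first.
    by move=> i _; rewrite mcoeffZ coef_ff.
  rewrite (bigD1 k) // eqxx mulr1 (eq_bigr (fun _ => 0)).
    by rewrite big1_eq => h; rewrite -h; exact: (esym (addr0 (a k))).
  by move=> i /negbTE ->; rewrite mulr0.
split; first exact: Ha.
move: H; rewrite big1 ?add0r; last by move=> i _; rewrite Ha scale0r.
move/(f_equal (mcoeff (e 0 + e 3)%MM)).
by rewrite mcoeffZ coef_gg mulr1 mcoeff0.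
Qed.

Lemma in_ideal_add p q : in_ideal ff p -> in_ideal ff q -> in_ideal ff (p + q).
Proof.
move=> [c ->] [d ->]; exists (fun i => c i + d i).
by rewrite -big_split /=; apply: eq_bigr => i _; rewrite mulrDl.
Qed.

Lemma in_ideal0 : in_ideal ff 0.
Proof. by exists (fun _ => 0); rewrite big1 // => i _; rewrite mul0r. Qed.

Lemma in_ideal_mull q p : in_ideal ff p -> in_ideal ff (q * p).
Proof.
move=> [c ->]; exists (fun i => q * c i).
by rewrite mulr_sumr; apply: eq_bigr => i _; rewrite mulrA.
Qed.

Lemma in_ideal_f i q : in_ideal ff (q * ff i).
Proof.
exists (fun j => if j == i then q else 0).
rewrite (bigD1 i) //= eqxx big1 ?addr0 // => j /negbTE ->.
by rewrite mul0r.
Qed.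

Lemma in_ideal2 i j q r : in_ideal ff (q * ff i + r * ff j).
Proof. by apply: in_ideal_add; apply: in_ideal_f. Qed.

Lemma Xg (j : 'I_N) : in_ideal ff ('X_j * gg).
Proof.
have -> : 'X_j = x j by rewrite /x inord_val.
case: j => [[|[|[|[|j]]]] Hj] /=.
- have -> : x 0 * gg = x 0 * ff (Ordinal (isT : (2 < n.+3)%N))
      + (- x 1) * ff (Ordinal (isT : (0 < n.+3)%N)).
    by rewrite /ff /gg /=; ring.
  exact: in_ideal2.
- have -> : x 1 * gg = x 0 * ff (Ordinal (isT : (1 < n.+3)%N)).
    by rewrite /ff /gg /=; ring.
  exact: in_ideal_f.
- have -> : x 2 * gg = x 3 * ff (Ordinal (isT : (0 < n.+3)%N)).
    by rewrite /ff /gg /=; ring.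
  exact: in_ideal_f.
- have -> : x 3 * gg = x 3 * ff (Ordinal (isT : (2 < n.+3)%N))
      + (- x 2) * ff (Ordinal (isT : (1 < n.+3)%N)).
    by rewrite /ff /gg /=; ring.
  exact: in_ideal2.
- have Hj' : (j.+3 < n.+3)%N by lia.
  have -> : x j.+4 * gg = x 3 * ff (Ordinal Hj').
    by rewrite /ff /gg /=; ring.
  exact: in_ideal_f.
Qed.

Lemma main_ideal p : hcomp (in_principal gg) 3 p -> hcomp (in_ideal ff) 3 p.
Proof.
move=> [[c Hc] Hh]; split => //.
have c0 : c@_0%MM = 0.
  have : p@_(e 0 + e 3)%MM = 0.
    by apply: (dhomog_nemf_coeff Hh); rewrite /= mdegD !mdeg1.
  by rewrite Hc gg_X -{1}[(e 0 + e 3)%MM]addm0 mcoeffMX.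
rewrite Hc (mpolyE c) mulr_suml.
apply: big_ind => //; first exact: in_ideal0; first exact: in_ideal_add.
move=> m _.
have [->|nz] := eqVneq m 0%MM; first by rewrite c0 scale0r mul0r; exact: in_ideal0.
have [j Hj] : exists j, m j != 0%N.
  case: (pickP (fun j => m j != 0%N)) => [j Hj|H0]; first by exists j.
  case/eqP: nz; apply/mnmP => i; rewrite mnm0E.
  by move: (H0 i) => /negbFE/eqP.
have Hle : (U_(j) <= m)%MM by rewrite lep1mP.
rewrite -(submK Hle) mpolyXD -scalerAl -mulrA.
rewrite scalerAl; exact: in_ideal_mull (Xg j).
Qed.
End S.

Theorem proposition3 (n : nat) (hn : (4 <= n)%N) :
  exists (m P : nat) (f : 'I_P -> {mpoly CC[n]}) (g : {mpoly CC[n]}),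
    [/\ (P < n)%N,
        (forall i, f i \is m.-homog),
        g \is m.-homog,
        lin_indep f g &
        forall p, hcomp (in_principal g) m.+1 p -> hcomp (in_ideal f) m.+1 p].
Proof.
case: n hn => [|[|[|[|n]]]] // _.
exists 2%N, n.+3, (@ff n), (gg n); split => //.
- exact: homog_ff.
- exact: homog_xx.
- exact: lin_indep_ff.
- exact: main_ideal.
Qed.
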